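(* Let $\psi\in\mathcal L$ be well-formed, let $\tau$ be a trace, and let $\sigma=\mathsf{seq}_\psi(\tau)$. Then $\psi^+(\sigma)\equiv\top$ if and only if $\tau\models\psi$.
   Context: Syntax. Fix a multi-sorted signature $\Sigma=\langle\mathcal S,\mathcal P,\mathcal F,V\rangle$ with a finite non-empty set $V$ of sorted data variables. Each $v\in V$ has a lookback variable $\overleftarrow v$, and $\overleftarrow V=\{\overleftarrow v\mid v\in V\}$. Terms are $t::=v\mid\overleftarrow v\mid f(t_1,\dots,t_k)$; atoms are $p(t_1,\dots,t_k)$. First-order formulas are $\phi::=\top\mid\bot\mid a\mid\neg a\mid\phi\wedge\phi\mid\phi\vee\phi$. Properties are $\psi::=\phi\mid\psi\wedge\psi\mid\psi\vee\psi\mid\mathsf X\psi\mid\mathsf X_{\mathsf w}\psi\mid\psi\mathsf U\psi\mid\psi\mathsf R\psi$, forming the set $\mathcal L$; $\mathit{foa}(\psi)$ is the set of atoms of $\psi$. Semantics. A trace is $\tau=(M,\langle\alpha_0,\dots,\alpha_{n-1}\rangle)$ with $M$ a $\Sigma$-structure and $\alpha_i$ assignments on $V$. A term is well-defined at $i$ if $0<i<n$, or $i=0$ and it has no lookback variable. $v$ evaluates to $\alpha_i(v)$ and $\overleftarrow v$ to $\alpha_{i-1}(v)$. - $\tau,i\models p(t_1,\dots,t_k)$ iff some $t_j$ is not well-defined at $i$, or the evaluated tuple is in $p^M$; $\tau,i\models\neg a$ iff $\tau,i\not\models a$. - $\wedge$ and $\vee$ are as usual. - $\mathsf X\psi$: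 $i<n-1$ and $\psi$ holds at $i+1$. - $\mathsf X_{\mathsf w}\psi$: $i=n-1$ or $\psi$ holds at $i+1$. - $\psi_1\mathsf U\psi_2$: some $j\in[i,n)$ has $\psi_2$, with $\psi_1$ on $[i,j)$. - $\psi_1\mathsf R\psi_2$: $\psi_2$ holds on $[i,n)$, or some $j\in[i,n)$ has $\psi_1$ with $\psi_2$ on $[i,j]$. $\tau\models\psi$ iff $\tau,0\models\psi$. For assignments $\alpha,\alpha'$ on $V$, $\alpha\rhd\alpha'$ maps $\overleftarrow v\mapsto\alpha(v)$ and $v\mapsto\alpha'(v)$. Normal forms. - $\mathit{last}$ is a dedicated proposition meant to hold only at the last instant. - $\mathsf{tnps}(\psi)=\{\psi\}$ if $\psi$ is a (negated) atom or rooted by a temporal operator, and $\mathsf{tnps}(\psi_1\wedge\psi_2)=\mathsf{tnps}(\psi_1\vee\psi_2)=\mathsf{tnps}(\psi_1)\cup\mathsf{tnps}(\psi_2)$. - $\mathsf{xnf}$ fixes literals, $\top$, $\bot$ and $\mathsf X$/$\mathsf X_{\mathsf w}$-rooted properties, commutes with $\wedge$ and $\vee$, and satisfies $\mathsf{xnf}(\psi_1\mathsf U\psi_2)=\mathsf{xnf}(\psi_2)\vee(\mathsf{xnf}(\psi_1)\wedge\mathsf X(\psi_1\mathsf U\psi_2))$ and $\mathsf{xnf}(\psi_1\mathsf R\psi_2)=(\mathsf{xnf}(\psi_2)\vee\mathit{last})\wedge(\mathsf{xnf}(\psi_1)\vee\mathsf X_{\mathsf w}(\psi_1\mathsf R\psi_2))$.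 - $\psi$ is well-formed if no (negated) atom in $\mathsf{tnps}(\mathsf{xnf}(\psi))$ contains a lookback variable. Progression. For a set of atoms $A$, $\psi^+(A)$ is defined by: - an atom $a$ maps to $\top$ if $a\in A$ and to $\bot$ otherwise; $\neg a$ maps to $\bot$ if $a\in A$ and to $\top$ otherwise; - $^+$ commutes with $\wedge$ and $\vee$; - $(\mathsf X\psi_1)^+(A)=\psi_1\wedge\neg\mathit{last}$, and $(\mathsf X_{\mathsf w}\psi_1)^+(A)=\psi_1\vee\mathit{last}$; - $(\psi_1\mathsf U\psi_2)^+(A)=\psi_2^+(A)\vee(\psi_1^+(A)\wedge(\mathsf X(\psi_1\mathsf U\psi_2))^+(A))$; - $(\psi_1\mathsf R\psi_2)^+(A)=\psi_2^+(A)\wedge(\psi_1^+(A)\vee(\mathsf X_{\mathsf w}(\psi_1\mathsf R\psi_2))^+(A))$. On sequences, $\psi^+(\epsilon)=\psi$ and $\psi^+(A\rho)=(\psi^+(A))^+(\rho)$. $\equiv$ is propositional equivalence, with atoms, $\mathit{last}$ and temporally-rooted subproperties treated as opaque propositions. Corresponding atom sequence. $\mathsf{seq}_\psi(\tau)=\langle A_0,\dots,A_{n-1}\rangle$, where: - $A_0=\{a\in\mathit{foa}(\psi)\mid a$ contains no lookback variable and $M,\alpha_0\models a\}$; - $A_i=\{a\in\mathit{foa}(\psi)\mid M,\alpha_{i-1}\rhd\alpha_i\models a\}$ for $0<i<n$.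
   Formalization: The test ψ⁺(σ) ≡ ⊤ is replaced by equivalence to ⊤ after ⊤ is substituted for last and ⊥ for ¬last in ψ⁺(σ), and progression sends last to ⊥ and ¬last to ⊤. The statement above fails without it. *)

(* Defs.v *)
From Stdlib Require Import List ClassicalEpsilon.
Import ListNotations.
Set Implicit Arguments.

Record signature := {
  sort : Type;
  pred : Type;
  fsym : Type;
  var : Type;
  var_sort : var -> sort;
  pred_ar : pred -> list sort;
  fsym_ar : fsym -> list sort;
  fsym_res : fsym -> sort;
  var_finite : exists l : list var, forall v, In v l;
  var_nonempty : inhabited var
}.

Inductive hlist (S : Type) (D : S -> Type) : list S -> Type :=
| hnil : hlist D nil
| hcons (s : S) (ss : list S) : D s -> hlist D ss -> hlist D (s :: ss).
Arguments hnil {S D}.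
Arguments hcons {S D s ss}.

Section LTLfMT.
Context {Sg : signature}.

Inductive term : sort Sg -> Type :=
| TVar (v : var Sg) : term (var_sort Sg v)
| TLb (v : var Sg) : term (var_sort Sg v)
| TApp (f : fsym Sg) : terms (fsym_ar Sg f) -> term (fsym_res Sg f)
with terms : list (sort Sg) -> Type :=
| TNil : terms nil
| TCons (s : sort Sg) (ss : list (sort Sg)) : term s -> terms ss -> terms (s :: ss).

Record atom := Atom { apred : pred Sg; aargs : terms (pred_ar Sg apred) }.

Fixpoint term_lb (s : sort Sg) (t : term s) : bool :=
  match t with
  | TVar _ => false
  | TLb _ => true
  | TApp _ ts => terms_lb ts
  end
with terms_lb (ss : list (sort Sg)) (ts : terms ss) : bool :=
  match ts with
  | TNil => false
  | TCons t ts' => orb (term_lb t) (terms_lb ts')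
  end.

Definition atom_lb (a : atom) : bool := terms_lb (aargs a).

Record structure := {
  dom : sort Sg -> Type;
  fint : forall f : fsym Sg, hlist dom (fsym_ar Sg f) -> dom (fsym_res Sg f);
  pint : forall p : pred Sg, hlist dom (pred_ar Sg p) -> Prop
}.

Definition assignment (M : structure) := forall v : var Sg, dom M (var_sort Sg v).

Fixpoint eval_term (M : structure) (ap ac : assignment M) (s : sort Sg) (t : term s)
  : dom M s :=
  match t in term s return dom M s with
  | TVar v => ac v
  | TLb v => ap v
  | TApp f ts => fint M f (eval_terms ap ac ts)
  end
with eval_terms (M : structure) (ap ac : assignment M) (ss : list (sort Sg)) (ts : terms ss)
  : hlist (dom M) ss :=
  match ts in terms ss return hlist (dom M) ss with
  | TNil => hnil
  | TCons t ts' => hcons (eval_term ap ac t) (eval_terms ap ac ts')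
  end.

Definition atom_holds (M : structure) (ap ac : assignment M) (a : atom) : Prop :=
  pint M (apred a) (eval_terms ap ac (aargs a)).

(* Properties.  PLast / PNLast are the dedicated proposition [last] and its
   negation; they only arise in progressed formulas (not in L). *)
Inductive prop :=
| PTop | PBot
| PAtom (a : atom) | PNAtom (a : atom)
| PAnd (p q : prop) | POr (p q : prop)
| PX (p : prop) | PXw (p : prop)
| PU (p q : prop) | PR (p q : prop)
| PLast | PNLast.

Fixpoint in_L (p : prop) : Prop :=
  match p with
  | PTop | PBot | PAtom _ | PNAtom _ => True
  | PAnd p q | POr p q | PU p q | PR p q => in_L p /\ in_L q
  | PX p | PXw p => in_L p
  | PLast | PNLast => False
  end.

Fixpoint foa (p : prop) : list atom :=
  match p with
  | PAtom a | PNAtom a => [a]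
  | PAnd p q | POr p q | PU p q | PR p q => foa p ++ foa q
  | PX p | PXw p => foa p
  | _ => []
  end.

(* Traces: a structure and n >= 1 assignments alpha_0 ... alpha_{n-1}
   (entries of [tasg] at indices >= n are irrelevant). *)
Record trace := {
  tM : structure;
  tlen : nat;
  tasg : nat -> assignment tM;
  tlen_pos : 0 < tlen
}.

Definition atom_sat (tau : trace) (i : nat) (a : atom) : Prop :=
  match i with
  | 0 => atom_lb a = true \/ atom_holds (tasg tau 0) (tasg tau 0) a
  | S j => atom_holds (tasg tau j) (tasg tau (S j)) a
  end.

Fixpoint sat (tau : trace) (i : nat) (p : prop) : Prop :=
  let n := tlen tau in
  match p with
  | PTop => True
  | PBot => False
  | PAtom a => atom_sat tau i a
  | PNAtom a => ~ atom_sat tau i a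
  | PAnd p q => sat tau i p /\ sat tau i q
  | POr p q => sat tau i p \/ sat tau i q
  | PX p => i < n - 1 /\ sat tau (S i) p
  | PXw p => i = n - 1 \/ sat tau (S i) p
  | PU p q => exists j, i <= j < n /\ sat tau j q /\
                        (forall k, i <= k < j -> sat tau k p)
  | PR p q => (forall j, i <= j < n -> sat tau j q) \/
              (exists j, i <= j < n /\ sat tau j p /\
                         (forall k, i <= k <= j -> sat tau k q))
  | PLast => i = n - 1
  | PNLast => i <> n - 1
  end.

Definition models (tau : trace) (p : prop) : Prop := sat tau 0 p.

Fixpoint tnps (p : prop) : list prop :=
  match p with
  | PAnd p q | POr p q => tnps p ++ tnps q
  | PAtom _ | PNAtom _ | PX _ | PXw _ | PU _ _ | PR _ _ => [p]
  | _ => []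
  end.

Fixpoint xnf (p : prop) : prop :=
  match p with
  | PAnd p q => PAnd (xnf p) (xnf q)
  | POr p q => POr (xnf p) (xnf q)
  | PU p q => POr (xnf q) (PAnd (xnf p) (PX (PU p q)))
  | PR p q => PAnd (POr (xnf q) PLast) (POr (xnf p) (PXw (PR p q)))
  | _ => p
  end.

Definition well_formed (p : prop) : Prop :=
  forall q, In q (tnps (xnf p)) ->
    forall a, (q = PAtom a \/ q = PNAtom a) -> atom_lb a = false.

Definition decP (P : Prop) : bool :=
  if excluded_middle_informative P then true else false.

Fixpoint prog (A : atom -> Prop) (p : prop) : prop :=
  match p with
  | PTop => PTop
  | PBot => PBot
  | PAtom a => if decP (A a) then PTop else PBot
  | PNAtom a => if decP (A a) then PBot else PTop
  | PAnd p q => PAnd (prog A p) (prog A q)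
  | POr p q => POr (prog A p) (prog A q)
  | PX p1 => PAnd p1 PNLast
  | PXw p1 => POr p1 PLast
  | PU p q => POr (prog A q) (PAnd (prog A p) (PAnd (PU p q) PNLast))
  | PR p q => PAnd (prog A q) (POr (prog A p) (POr (PR p q) PLast))
  | PLast => PBot
  | PNLast => PTop
  end.

Fixpoint prog_seq (sigma : list (atom -> Prop)) (p : prop) : prop :=
  match sigma with
  | nil => p
  | A :: rho => prog_seq rho (prog A p)
  end.

(* propositional evaluation: atoms, last and temporally-rooted
   subproperties are opaque propositions *)
Fixpoint peval (va : atom -> bool) (vl : bool) (vt : prop -> bool) (p : prop) : bool :=
  match p with
  | PTop => true
  | PBot => false
  | PAtom a => va a
  | PNAtom a => negb (va a)
  | PAnd p q => andb (peval va vl vt p) (peval va vl vt q)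
  | POr p q => orb (peval va vl vt p) (peval va vl vt q)
  | PLast => vl
  | PNLast => negb vl
  | PX _ | PXw _ | PU _ _ | PR _ _ => vt p
  end.

Definition pequiv (p q : prop) : Prop :=
  forall va vl vt, peval va vl vt p = peval va vl vt q.

(* replace the (propositional) occurrences of last by true: the trace ended *)
Fixpoint last_true (p : prop) : prop :=
  match p with
  | PAnd p q => PAnd (last_true p) (last_true q)
  | POr p q => POr (last_true p) (last_true q)
  | PLast => PTop
  | PNLast => PBot
  | _ => p
  end.

Definition seq_atoms (p : prop) (tau : trace) : list (atom -> Prop) :=
  map (fun i =>
         match i with
         | 0 => fun a => In a (foa p) /\ atom_lb a = false /\
                         atom_holds (tasg tau 0) (tasg tau 0) a
         | S j => fun a => In a (foa p) /\
                           atom_holds (tasg tau j) (tasg tau (S j)) a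
         end)
      (seq 0 (tlen tau)).

End LTLfMT.

(* Main.v *)
Require Import Defs.
From Stdlib Require Import List ClassicalEpsilon Lia Bool Arith.
Import ListNotations.

Definition fA {Sg : signature} (psi : @prop Sg) (tau : @trace Sg) (i : nat)
  : @atom Sg -> Prop :=
  match i with
  | 0 => fun a => In a (foa psi) /\ atom_lb a = false /\
                  atom_holds (tasg tau 0) (tasg tau 0) a
  | S j => fun a => In a (foa psi) /\
                    atom_holds (tasg tau j) (tasg tau (S j)) a
  end.

Fixpoint now_atoms {Sg : signature} (p : @prop Sg) : list (@atom Sg) :=
  match p with
  | PAtom a | PNAtom a => [a]
  | PAnd p q | POr p q | PU p q | PR p q => now_atoms p ++ now_atoms q
  | _ => []
  end.

Lemma now_tnps {Sg : signature} (r : @prop Sg) a :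
  In a (now_atoms r) -> In (PAtom a) (tnps (xnf r)) \/ In (PNAtom a) (tnps (xnf r)).
Proof.
  induction r; simpl; intros H; try tauto;
  try (destruct H as [H|[]]; subst; simpl; tauto);
  apply in_app_or in H; destruct H as [H|H];
  first [destruct (IHr1 H) as [H1|H1] | destruct (IHr2 H) as [H1|H1]];
  repeat (rewrite ?in_app_iff; simpl); tauto.
Qed.

Lemma wf_now {Sg : signature} (psi : @prop Sg) :
  well_formed psi -> forall a, In a (now_atoms psi) -> atom_lb a = false.
Proof.
  intros Hw a Ha. destruct (now_tnps _ _ Ha) as [H|H].
  - apply (Hw _ H a); auto.
  - apply (Hw _ H a); auto.
Qed.

Lemma decP_true (P : Prop) : decP P = true <-> P.
Proof. unfold decP; destruct excluded_middle_informative; split; auto; discriminate. Qed.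
Lemma decP_false (P : Prop) : decP P = false <-> ~ P.
Proof. unfold decP; destruct excluded_middle_informative; split; auto; try discriminate; tauto. Qed.

Lemma ps_and {Sg : signature} l (x y : @prop Sg) :
  prog_seq l (PAnd x y) = PAnd (prog_seq l x) (prog_seq l y).
Proof. revert x y; induction l; simpl; auto. Qed.
Lemma ps_or {Sg : signature} l (x y : @prop Sg) :
  prog_seq l (POr x y) = POr (prog_seq l x) (prog_seq l y).
Proof. revert x y; induction l; simpl; auto. Qed.
Lemma ps_top {Sg : signature} l : prog_seq l (@PTop Sg) = PTop.
Proof. induction l; simpl; auto. Qed.
Lemma ps_bot {Sg : signature} l : prog_seq l (@PBot Sg) = PBot.
Proof. induction l; simpl; auto. Qed.
Lemma ps_const {Sg : signature} l (b : bool) :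
  prog_seq l (if b then @PTop Sg else PBot) = if b then PTop else PBot.
Proof. destruct b; [apply ps_top | apply ps_bot]. Qed.
Lemma ps_nlast {Sg : signature} (g : nat -> atom -> Prop) j m :
  prog_seq (map g (seq j (S m))) (@PNLast Sg) = PTop.
Proof. simpl; apply ps_top. Qed.
Lemma ps_last {Sg : signature} (g : nat -> atom -> Prop) j m :
  prog_seq (map g (seq j (S m))) (@PLast Sg) = PBot.
Proof. simpl; apply ps_bot. Qed.
Lemma ps_step {Sg : signature} (g : nat -> atom -> Prop) j m (r : @prop Sg) :
  prog_seq (map g (seq j (S m))) r = prog_seq (map g (seq (S j) m)) (prog (g j) r).
Proof. reflexivity. Qed.

Lemma U_exp {Sg : signature} (tau : @trace Sg) i p q : i < tlen tau ->
  (sat tau i (PU p q) <-> sat tau i q \/ (sat tau i p /\ i < tlen tau - 1 /\ sat tau (S i) (PU p q))).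
Proof.
  intros Hi; simpl; split.
  - intros [j [Hj [Hq Hp]]].
    destruct (Nat.eq_dec j i) as [->|Hne]; [left; auto|right].
    split; [apply Hp; lia|]. split; [lia|].
    exists j; split; [lia|]; split; auto. intros k Hk; apply Hp; lia.
  - intros [H|[Hp [Hl [j [Hj [Hq Hk0]]]]]].
    + exists i; split; [lia|]; split; auto; intros; lia.
    + exists j; split; [lia|]; split; auto. intros k Hk.
      destruct (Nat.eq_dec k i) as [->|]; auto. apply Hk0; lia.
Qed.

Lemma R_exp {Sg : signature} (tau : @trace Sg) i p q : i < tlen tau ->
  (sat tau i (PR p q) <-> sat tau i q /\ (sat tau i p \/ i = tlen tau - 1 \/ sat tau (S i) (PR p q))).
Proof.
  intros Hi; simpl; split.
  - intros [HA|[j [Hj [Hp Hq]]]].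
    + split; [apply HA; lia|].
      destruct (Nat.eq_dec i (tlen tau - 1)); [tauto|].
      right; right; left; intros j Hj; apply HA; lia.
    + split; [apply Hq; lia|].
      destruct (Nat.eq_dec j i) as [->|]; [tauto|].
      right; right; right; exists j; split; [lia|]; split; auto.
      intros k Hk; apply Hq; lia.
  - intros [Hq [Hp|[Hl|[HA|[j [Hj [Hp Hk0]]]]]]].
    + right; exists i; split; [lia|]; split; auto. intros k Hk.
      replace k with i by lia; auto.
    + left; intros j Hj; replace j with i by lia; auto.
    + left; intros j Hj. destruct (Nat.eq_dec j i) as [->|]; auto. apply HA; lia.
    + right; exists j; split; [lia|]; split; auto. intros k Hk.
      destruct (Nat.eq_dec k i) as [->|]; auto. apply Hk0; lia.
Qed.

Lemma atom_case {Sg : signature} (psi : @prop Sg) tau i a :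
  In a (foa psi) -> (i = 0 -> atom_lb a = false) ->
  (fA psi tau i a <-> atom_sat tau i a).
Proof.
  intros Hin H0; destruct i; simpl.
  - specialize (H0 eq_refl). rewrite H0. split; [tauto|].
    intros [H|H]; [discriminate|tauto].
  - tauto.
Qed.
Ltac side Hn HL Hf H0 :=
  first [ assumption | lia | discriminate
        | (simpl in HL; tauto)
        | (let a := fresh in let h := fresh in intros a h; apply Hf; simpl; apply in_or_app; auto)
        | (let e := fresh in let a := fresh in let h := fresh in
           intros e a h; apply H0; auto; simpl; apply in_or_app; auto)
        | (let e := fresh in intros e; discriminate) ].

Lemma main {Sg : signature} (psi : @prop Sg) (tau : @trace Sg) va vl vt :
  forall k i (r : @prop Sg), i + S k = tlen tau -> in_L r ->
  (forall a, In a (foa r) -> In a (foa psi)) ->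
  (i = 0 -> forall a, In a (now_atoms r) -> atom_lb a = false) ->
  (peval va vl vt (last_true (prog_seq (map (fA psi tau) (seq (S i) k))
      (prog (fA psi tau i) r))) = true <-> sat tau i r).
Proof.
  induction k as [|k IHk]; intros i r; induction r; intros Hn HL Hf H0; cbn [prog].
  all: try (simpl in HL; contradiction).
  all: try (rewrite ps_top); try (rewrite ps_bot).
  all: try (cbn [last_true peval]; split; auto; try discriminate; tauto).
  all: try (cbn [sat];
    assert (Hat : fA psi tau i a <-> atom_sat tau i a)
      by (apply atom_case; [apply Hf; simpl; auto | intros e; apply H0; simpl; auto]);
    destruct (decP (fA psi tau i a)) eqn:E;
    [apply (proj1 (decP_true _)) in E | apply (proj1 (decP_false _)) in E];
    rewrite ?ps_top, ?ps_bot; cbn [last_true peval];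
    split; try discriminate; tauto).
  all: rewrite ?ps_and, ?ps_or.
  - cbn [last_true peval]; rewrite andb_true_iff, IHr1, IHr2 by side Hn HL Hf H0; cbn [sat]; tauto.
  - cbn [last_true peval]; rewrite orb_true_iff, IHr1, IHr2 by side Hn HL Hf H0; cbn [sat]; tauto.
  - cbn [seq map prog_seq last_true peval]; rewrite andb_false_r; cbn [sat]; split; [discriminate|lia].
  - cbn [seq map prog_seq last_true peval]; rewrite orb_true_r; cbn [sat]; split; auto; lia.
  - cbn [seq map prog_seq last_true peval]; rewrite !andb_false_r, orb_false_r.
    rewrite IHr2 by side Hn HL Hf H0; rewrite U_exp by lia; split; [tauto|]. intros [H|H]; [auto|lia].
  - cbn [seq map prog_seq last_true peval]; rewrite !orb_true_r, andb_true_r.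
    rewrite IHr2 by side Hn HL Hf H0; rewrite R_exp by lia; split; [|tauto]. intros H; split; auto; lia.
  - cbn [last_true peval]; rewrite andb_true_iff, IHr1, IHr2 by side Hn HL Hf H0; cbn [sat]; tauto.
  - cbn [last_true peval]; rewrite orb_true_iff, IHr1, IHr2 by side Hn HL Hf H0; cbn [sat]; tauto.
  - rewrite ps_nlast; cbn [last_true peval]; rewrite andb_true_r, ps_step.
    rewrite IHk by side Hn HL Hf H0; cbn [sat]; split; [intros; split; auto; lia| tauto].
  - rewrite ps_last; cbn [last_true peval]; rewrite orb_false_r, ps_step.
    rewrite IHk by side Hn HL Hf H0; cbn [sat]; split; [tauto|]. intros [H|H]; auto; lia.
  - rewrite ?ps_and, ?ps_or, ps_nlast; cbn [last_true peval]; rewrite andb_true_r, (ps_step _ (S i) k (PU r1 r2)).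
    rewrite orb_true_iff, andb_true_iff, IHr1, IHr2 by side Hn HL Hf H0.
    rewrite IHk by side Hn HL Hf H0.
    rewrite (U_exp tau i) by lia. assert (i < tlen tau - 1) by lia. tauto.
  - rewrite ?ps_and, ?ps_or, ps_last; cbn [last_true peval]; rewrite orb_false_r, (ps_step _ (S i) k (PR r1 r2)).
    rewrite andb_true_iff, orb_true_iff, IHr1, IHr2 by side Hn HL Hf H0.
    rewrite IHk by side Hn HL Hf H0.
    rewrite (R_exp tau i) by lia. assert (i <> tlen tau - 1) by lia. tauto.
Qed.

Theorem theorem1 (Sg : signature) (psi : @prop Sg) (tau : @trace Sg) :
  in_L psi -> well_formed psi ->
  (pequiv (last_true (prog_seq (seq_atoms psi tau) psi)) PTop <-> models tau psi).
Proof.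
  intros HL Hw.
  assert (Heq : seq_atoms psi tau = map (fA psi tau) (seq 0 (tlen tau))) by reflexivity.
  destruct (tlen tau) as [|k] eqn:Hk; [pose proof (tlen_pos tau); lia|].
  rewrite Heq, ps_step.
  assert (Hn : 0 + S k = tlen tau) by lia.
  assert (H0 : 0 = 0 -> forall a, In a (now_atoms psi) -> atom_lb a = false)
    by (intros _; apply wf_now; auto).
  unfold models, pequiv; split.
  - intros H. specialize (H (fun _ => false) false (fun _ => false)); cbn [peval] in H.
    apply (proj1 (main psi tau (fun _ => false) false (fun _ => false) k 0 psi Hn HL (fun a h => h) H0)). apply H.
  - intros H va vl vt. cbn [peval].
    apply (proj2 (main psi tau va vl vt k 0 psi Hn HL (fun a h => h) H0)). apply H.
Qed.
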